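(* Let $N\ge 0$ be an integer, let $q$ be a nonzero complex number with $q^j\neq 1$ for $1\le j\le N$, and let $a,b,c$ be complex numbers with $b,c\neq 0$, $b/c\notin\{q^{1-N},\dots,q^{N-1}\}$ and $bc\notin\{1,q^{-1},\dots,q^{1-N}\}$. Then, as polynomials in $x$, $$h_N(x;a)=\sum_{k=0}^N C_k^N(a,b,c)\,h_k(x;b)\,h_{N-k}(x;c),$$ where $$C_k^N(a,b,c)=q^{k(k-N)}\binom{N}{k}_q\frac{(a/c;q)_k\,(q^{N-k}ac;q)_k\,(a/b;q)_{N-k}\,(q^kab;q)_{N-k}}{(q^{k-N}b/c;q)_k\,(q^{-k}c/b;q)_{N-k}\,(bc;q)_N}.$$ Equivalently, with $x=\xi+\xi^{-1}$, $${}_8W_7(q^{-N}b/c;\,q^{-N},q^{1-N}/(ac),a/c,b\xi,b\xi^{-1};q,q)=\frac{(cb,c/b,a\xi,a\xi^{-1};q)_N}{(ab,a/b,c\xi,c\xi^{-1};q)_N}.$$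
   Context: $(a;q)_k=\prod_{j=0}^{k-1}(1-aq^j)$, $(a_1,\dots,a_n;q)_k=\prod_i(a_i;q)_k$, $\binom{N}{k}_q=\frac{(q;q)_N}{(q;q)_k(q;q)_{N-k}}$. $h_k(x;a)=\prod_{j=0}^{k-1}(1-axq^j+a^2q^{2j})=(a\xi,a\xi^{-1};q)_k$ where $\xi+\xi^{-1}=x$. Very-well-poised series: ${}_{r+1}W_r(a;b_1,\dots,b_{r-2};q,z)=\sum_{k\ge0}\frac{1-aq^{2k}}{1-a}\frac{(a,b_1,\dots,b_{r-2};q)_k}{(q,aq/b_1,\dots,aq/b_{r-2};q)_k}z^k$, which terminates when some $b_i=q^{-n}$, $n\in\mathbb Z_{\ge0}$. *)

(* Defs.v *)
From HB Require Import structures.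
From mathcomp Require Import all_boot all_order all_algebra.
From mathcomp Require Import complex.
From mathcomp Require Import reals.
Set Implicit Arguments. Unset Strict Implicit. Unset Printing Implicit Defensive.
Import Order.TTheory GRing.Theory Num.Theory.
Local Open Scope ring_scope.

Section QDefs.
Variable F : fieldType.

Definition qpoch (q a : F) (k : nat) : F := \prod_(j < k) (1 - a * q ^+ j).

Definition qbinom (q : F) (N k : nat) : F :=
  qpoch q q N / (qpoch q q k * qpoch q q (N - k)).

Definition hpoly (q : F) (k : nat) (a : F) : {poly F} :=
  \prod_(j < k) (1 - (a * q ^+ j) *: 'X + (a ^+ 2 * q ^+ (2 * j))%:P).

Definition Ccoef (q : F) (N k : nat) (a b c : F) : F :=
  q ^ ((k%:Z) * (k%:Z - N%:Z)) * qbinom q N k *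
  (qpoch q (a / c) k * qpoch q (q ^+ (N - k) * a * c) k *
   qpoch q (a / b) (N - k) * qpoch q (q ^+ k * a * b) (N - k)) /
  (qpoch q (q ^ (k%:Z - N%:Z) * b / c) k *
   qpoch q (q ^ (- k%:Z) * c / b) (N - k) * qpoch q (b * c) N).
End QDefs.

(* Main.v *)
Require Import Defs.
From HB Require Import structures.
From mathcomp Require Import all_boot all_order all_algebra.
From mathcomp Require Import complex.
From mathcomp Require Import reals.
From mathcomp Require Import ring zify.
Set Implicit Arguments. Unset Strict Implicit. Unset Printing Implicit Defensive.
Import Order.TTheory GRing.Theory Num.Theory.
Local Open Scope ring_scope.

Ltac bnd := repeat match goal with
  | H : is_true (@negb (@eq_op _ _ _)) |- _ => clear H
  | H : forall _, _ |- _ => clear H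
  end; lia.

Section Gen.
Variable F : fieldType.
Implicit Types (q a b c x : F).

Lemma qpochS q x n : qpoch q x n.+1 = qpoch q x n * (1 - x * q ^+ n).
Proof. by rewrite /qpoch big_ord_recr. Qed.

Lemma qpochSl q x n : qpoch q x n.+1 = (1 - x) * qpoch q (x * q) n.
Proof.
rewrite /qpoch big_ord_recl expr0 mulr1; congr (_ * _).
by apply: eq_bigr => i _; rewrite /bump /= exprS mulrA.
Qed.

Lemma qpoch0 q x : qpoch q x 0 = 1.
Proof. by rewrite /qpoch big_ord0. Qed.

Lemma qpoch_neq0 q x n : (forall j, (j < n)%N -> 1 - x * q ^+ j != 0) -> qpoch q x n != 0.
Proof. by move=> H; rewrite /qpoch; apply/prodf_neq0 => i _; apply: H. Qed.

Lemma CcoefE q a b c k r :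
  Ccoef q (k + r) k a b c = (q ^+ (k * r))^-1 * qbinom q (k+r) k *
   (qpoch q (a / c) k * qpoch q (q ^+ r * a * c) k * qpoch q (a / b) r *
    qpoch q (q ^+ k * a * b) r) /
   (qpoch q ((q ^+ r)^-1 * b / c) k * qpoch q ((q ^+ k)^-1 * c / b) r *
    qpoch q (b * c) (k + r)).
Proof.
rewrite /Ccoef addKn.
have -> : (k%:Z * (k%:Z - (k + r)%N%:Z)) = - ((k * r)%N%:Z).
  by rewrite PoszD PoszM; ring.
have -> : (k%:Z - (k + r)%N%:Z) = - (r%:Z) by rewrite PoszD; ring.
by rewrite -!exprnN.
Qed.


Definition Lpoly q j a : {poly F} :=
  1 - (a * q ^+ j) *: 'X + (a ^+ 2 * q ^+ (2 * j)%N)%:P.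

Lemma hpolyS q n a : hpoly q n.+1 a = hpoly q n a * Lpoly q n a.
Proof. by rewrite /hpoly big_ord_recr. Qed.

Lemma hpoly0 q a : hpoly q 0 a = 1.
Proof. by rewrite /hpoly big_ord0. Qed.

Lemma Lpoly_form q j a :
  Lpoly q j a = (1 + a ^+ 2 * q ^+ (2 * j)%N)%:P - (a * q ^+ j) *: 'X.
Proof. by rewrite /Lpoly polyCD polyC1 addrAC. Qed.

Lemma expr2n x j : x ^+ (2 * j)%N = x ^+ j * x ^+ j.
Proof. by rewrite mul2n -addnn exprD. Qed.

Lemma scale_form (al U V : F) :
  al *: (U%:P - V *: 'X) = (al * U)%:P - (al * V) *: ('X : {poly F}).
Proof. by rewrite scalerBr scale_polyC scalerA. Qed.

Definition Dd q k r b c := (b * q ^+ k - c * q ^+ r) * (1 - b * c * q ^+ (k + r)).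
Definition alf q k r a b c :=
  q ^+ r * (a * q ^+ k - c) * (1 - a * c * q ^+ r * q ^+ (k + r)) / Dd q k r b c.
Definition bet q k r a b c :=
  (b * q ^+ k - a * q ^+ (k + r)) * (1 - a * b * q ^+ (k + r) * q ^+ k) / Dd q k r b c.

Lemma Lsplit q k r a b c : Dd q k r b c != 0 ->
  Lpoly q (k + r) a = alf q k r a b c *: Lpoly q k b + bet q k r a b c *: Lpoly q r c.
Proof.
move=> hD; rewrite !Lpoly_form !scale_form.
set A := alf _ _ _ _ _ _; set B := bet _ _ _ _ _ _.
rewrite addrACA -opprD -scalerDl -polyCD.
have -> : (A * (1 + b ^+ 2 * q ^+ (2 * k)%N) + B * (1 + c ^+ 2 * q ^+ (2 * r)%N)) =
          (1 + a ^+ 2 * q ^+ (2 * (k + r))%N).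
  rewrite /A /B /alf /bet; move: hD; rewrite /Dd !expr2n !exprD.
  rewrite mulf_eq0 negb_or => /andP[h1 h2]; field; by rewrite h1 h2.
have -> : (A * (b * q ^+ k) + B * (c * q ^+ r)) = a * q ^+ (k + r).
  rewrite /A /B /alf /bet; move: hD; rewrite /Dd !exprD.
  rewrite mulf_eq0 negb_or => /andP[h1 h2]; field; by rewrite h1 h2.
by [].
Qed.


Lemma sum_shift (P : nat -> nat -> {poly F}) (f g : nat -> F) N :
  \sum_(k < N.+1) (f k *: P k.+1 (N - k)%N + g k *: P k (N - k)%N.+1) =
  \sum_(k < N.+2) ((if (k : nat) is k'.+1 then f k' else 0) +
                   (if (k <= N)%N then g k else 0)) *: P k (N.+1 - k)%N.
Proof.
rewrite big_split /=.
rewrite (eq_bigr (fun k : 'I_N.+2 => (if (k : nat) is k'.+1 then f k' else 0) *: P k (N.+1 - k)%N +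
   (if (k <= N)%N then g k else 0) *: P k (N.+1 - k)%N)); last by move=> i _; rewrite scalerDl.
rewrite big_split /=; congr (_ + _).
  by rewrite [RHS]big_ord_recl /= scale0r add0r; apply: eq_bigr => i _; rewrite subSS.
rewrite [RHS]big_ord_recr /= ltnn scale0r addr0; apply: eq_bigr => i _.
by rewrite -ltnS ltn_ord subSn // -ltnS ltn_ord.
Qed.


Lemma step q a b c N :
  (forall k, (k <= N)%N -> Dd q k (N - k) b c != 0) ->
  hpoly q N a = \sum_(k < N.+1) Ccoef q N k a b c *: (hpoly q k b * hpoly q (N - k) c) ->
  (forall k, (k < N.+2)%N -> Ccoef q N.+1 k a b c =
      (if k is k'.+1 then alf q k' (N - k') a b c * Ccoef q N k' a b c else 0) +
      (if (k <= N)%N then bet q k (N - k) a b c * Ccoef q N k a b c else 0)) ->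
  hpoly q N.+1 a =
    \sum_(k < N.+2) Ccoef q N.+1 k a b c *: (hpoly q k b * hpoly q (N.+1 - k) c).
Proof.
move=> hD IH hC.
rewrite hpolyS IH big_distrl /=.
pose P i j := hpoly q i b * hpoly q j c.
pose f k := alf q k (N - k) a b c * Ccoef q N k a b c.
pose g k := bet q k (N - k) a b c * Ccoef q N k a b c.
transitivity (\sum_(k < N.+1) (f k *: P k.+1 (N - k)%N + g k *: P k (N - k)%N.+1)).
  apply: eq_bigr => k _.
  have hk : (k <= N)%N by rewrite -ltnS ltn_ord.
  have -> : Lpoly q N a = Lpoly q (k + (N - k)) a by rewrite subnKC.
  rewrite (@Lsplit q k (N - k) a b c (hD k hk)).
  rewrite /P /f /g !hpolyS.
  rewrite -!mul_polyC !polyCM; ring.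
rewrite sum_shift; apply: eq_bigr => k _.
by rewrite /P hC.
Qed.


Lemma qpoch_back q y m : 1 - y * q ^+ m != 0 ->
  qpoch q y m = (1 - y) * qpoch q (y * q) m / (1 - y * q ^+ m).
Proof.
move=> h; rewrite -qpochSl qpochS; field; exact: h.
Qed.

Lemma nz_ratio (x y z w : F) : y != 0 -> w != 0 -> x * z != y * w ->
  1 - w^-1 * x / y * z != 0.
Proof.
move=> hy hw hne; apply: contra hne; rewrite subr_eq0 => /eqP e.
apply/eqP; have -> : x * z = y * w * (w^-1 * x / y * z) by field; apply/andP.
by rewrite -e mulr1.
Qed.

Lemma nz_sub (x y x' y' : F) : x != y -> x' = x -> y' = y -> x' - y' != 0.
Proof. by move=> h -> ->; rewrite subr_eq0. Qed.

Lemma qq_neq0 q n : (forall j, (0 < j <= n)%N -> q ^+ j != 1) -> qpoch q q n != 0.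
Proof.
move=> h; apply: qpoch_neq0 => j hj; rewrite -exprS subr_eq0 eq_sym; apply: h.
by rewrite ltnS.
Qed.

Lemma bc_neq0 q b c n : (forall j, (j < n)%N -> 1 - b * c * q ^+ j != 0) ->
  qpoch q (b * c) n != 0.
Proof. by move=> h; apply: qpoch_neq0. Qed.

Lemma mid q a b c m r :
  q != 0 -> b != 0 -> c != 0 ->
  (forall j, (0 < j <= (m + r).+2)%N -> q ^+ j != 1) ->
  (forall i j, (i <= (m + r).+1)%N -> (j <= (m + r).+1)%N -> b * q ^+ i != c * q ^+ j) ->
  (forall j, (j <= (m + r).+1)%N -> 1 - b * c * q ^+ j != 0) ->
  Ccoef q (m.+1 + r.+1) m.+1 a b c =
  alf q m r.+1 a b c * Ccoef q (m + r.+1) m a b c +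
  bet q m.+1 r a b c * Ccoef q (m.+1 + r) m.+1 a b c.
Proof.
move=> hq hb hc hQ hBC1 hBC2.
have hqn n : q ^+ n != 0 by apply: expf_neq0.
have ny : 1 - q ^- r.+1 * b / c * q ^+ m != 0.
  by apply: nz_ratio => //; apply: hBC1; bnd.
have nz : 1 - q ^- m.+1 * c / b * q ^+ r != 0.
  apply: nz_ratio => //; rewrite eq_sym; apply: hBC1; bnd.
have nX : qpoch q (q ^- r * b / c) m != 0.
  apply: qpoch_neq0 => j hj; apply: nz_ratio => //; apply: hBC1; bnd.
have nY : qpoch q (q ^- m * c / b) r != 0.
  apply: qpoch_neq0 => j hj; apply: nz_ratio => //; rewrite eq_sym; apply: hBC1; bnd.
have nQm : qpoch q q m != 0 by apply: qq_neq0 => j hj; apply: hQ; bnd.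
have nQr : qpoch q q r != 0 by apply: qq_neq0 => j hj; apply: hQ; bnd.
have nB : qpoch q (b * c) (m + r) != 0 by apply: bc_neq0 => j hj; apply: hBC2; bnd.
have nqm : 1 - q * q ^+ m != 0 by rewrite -exprS subr_eq0 eq_sym; apply: hQ; bnd.
have nqr : 1 - q * q ^+ r != 0 by rewrite -exprS subr_eq0 eq_sym; apply: hQ; bnd.
have nbc1 : 1 - b * c * (q ^+ m * q ^+ r) != 0 by rewrite -exprD; apply: hBC2; bnd.
have nbc2 : 1 - b * c * (q * (q ^+ m * q ^+ r)) != 0 by rewrite -exprD -exprS; apply: hBC2; bnd.
have g1 : q * q ^+ m * b - c * q ^+ r != 0.
  apply: (nz_sub (hBC1 m.+1 r _ _)); rewrite ?exprS; try ring; bnd.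
have g2 : q * q ^+ m * b - c != 0.
  apply: (nz_sub (hBC1 m.+1 0 _ _)); rewrite ?exprS ?expr0; try ring; bnd.
have g3 : q ^+ r * c - b * q ^+ m != 0.
  rewrite -oppr_eq0 opprB; apply: (nz_sub (hBC1 m r _ _)); try ring; bnd.
have g4 : q * q ^+ r * c - b * q ^+ m != 0.
  rewrite -oppr_eq0 opprB; apply: (nz_sub (hBC1 m r.+1 _ _)); rewrite ?exprS; try ring; bnd.
have g5 : q ^+ m * b - c * q ^+ r != 0.
  apply: (nz_sub (hBC1 m r _ _)); try ring; bnd.
have g6 : q * q ^+ r * c - b != 0.
  rewrite -oppr_eq0 opprB; apply: (nz_sub (hBC1 0 r.+1 _ _)); rewrite ?exprS ?expr0; try ring; bnd.
have g7 : b * q ^+ m - c * (q * q ^+ r) != 0.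
  apply: (nz_sub (hBC1 m r.+1 _ _)); rewrite ?exprS; try ring; bnd.
rewrite !CcoefE /qbinom !addKn.
have e1 : qpoch q (a / c) m.+1 = qpoch q (a / c) m * (1 - a / c * q ^+ m) := qpochS _ _ _.
have e2 : qpoch q (q ^+ r * a * c) m.+1 = (1 - q ^+ r * a * c) * qpoch q (q ^+ r.+1 * a * c) m.
  by rewrite qpochSl exprSr; congr (_ * qpoch _ _ _); ring.
have e3 : qpoch q (q ^+ r.+1 * a * c) m.+1 = qpoch q (q ^+ r.+1 * a * c) m * (1 - q ^+ r.+1 * a * c * q ^+ m) := qpochS _ _ _.
have e4 : qpoch q (a / b) r.+1 = qpoch q (a / b) r * (1 - a / b * q ^+ r) := qpochS _ _ _.
have e5 : qpoch q (q ^+ m * a * b) r.+1 = (1 - q ^+ m * a * b) * qpoch q (q ^+ m.+1 * a * b) r.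
  by rewrite qpochSl exprSr; congr (_ * qpoch _ _ _); ring.
have e6 : qpoch q (q ^+ m.+1 * a * b) r.+1 = qpoch q (q ^+ m.+1 * a * b) r * (1 - q ^+ m.+1 * a * b * q ^+ r) := qpochS _ _ _.
rewrite e1 e2 e3 e4 e5 e6 {e1 e2 e3 e4 e5 e6}.
have d1 : qpoch q (q ^- r * b / c) m.+1 = qpoch q (q ^- r * b / c) m * (1 - q ^- r * b / c * q ^+ m) := qpochS _ _ _.
have d2 : qpoch q (q ^- r.+1 * b / c) m.+1 = (1 - q ^- r.+1 * b / c) * qpoch q (q ^- r * b / c) m.
  rewrite qpochSl; congr (_ * qpoch _ _ _); rewrite exprS; field.
  by rewrite hq expf_neq0 ?hc.
have d3 : qpoch q (q ^- r.+1 * b / c) m = (1 - q ^- r.+1 * b / c) * qpoch q (q ^- r * b / c) m / (1 - q ^- r.+1 * b / c * q ^+ m).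
  rewrite qpoch_back //; congr (_ * qpoch _ _ _ / _); rewrite exprS; field.
  by rewrite hq expf_neq0 ?hc.
have d4 : qpoch q (q ^- m * c / b) r.+1 = qpoch q (q ^- m * c / b) r * (1 - q ^- m * c / b * q ^+ r) := qpochS _ _ _.
have d5 : qpoch q (q ^- m.+1 * c / b) r.+1 = (1 - q ^- m.+1 * c / b) * qpoch q (q ^- m * c / b) r.
  rewrite qpochSl; congr (_ * qpoch _ _ _); rewrite exprS; field.
  by rewrite hq expf_neq0 ?hb.
have d6 : qpoch q (q ^- m.+1 * c / b) r = (1 - q ^- m.+1 * c / b) * qpoch q (q ^- m * c / b) r / (1 - q ^- m.+1 * c / b * q ^+ r).
  rewrite qpoch_back //; congr (_ * qpoch _ _ _ / _); rewrite exprS; field.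
  by rewrite hq expf_neq0 ?hb.
rewrite d1 d2 d3 d4 d5 d6 {d1 d2 d3 d4 d5 d6}.
rewrite !addSn !addnS !qpochS.
set QN := qpoch q q (m + r); set Qm := qpoch q q m; set Qr := qpoch q q r.
set A1 := qpoch q (a / c) m; set A2 := qpoch q (q ^+ r.+1 * a * c) m.
set A3 := qpoch q (a / b) r; set A4 := qpoch q (q ^+ m.+1 * a * b) r.
set X := qpoch q (q ^- r * b / c) m; set Y := qpoch q (q ^- m * c / b) r.
set B := qpoch q (b * c) (m + r).
rewrite /alf /bet /Dd.
move: ny nz; rewrite !mulSn !mulnS !addnS !addSn !exprS !exprD.
have nw := hqn (m * r); have nu := hqn m; have nv := hqn r.
set u := q ^+ m; set v := q ^+ r; set w := q ^+ (m * r).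
move=> ny nz.
field.
by rewrite hb nu hq g1 hc nv nbc1 nB nY g2 g3 nX nQr nqm nQm nw nbc2 g4 g5 g6 nqr g7.
Qed.


Lemma low q a b c N :
  q != 0 -> b != 0 -> c != 0 ->
  (forall j, (0 < j <= N.+1)%N -> q ^+ j != 1) ->
  (forall i j, (i <= N)%N -> (j <= N)%N -> b * q ^+ i != c * q ^+ j) ->
  (forall j, (j <= N)%N -> 1 - b * c * q ^+ j != 0) ->
  Ccoef q N.+1 0 a b c = bet q 0 N a b c * Ccoef q N 0 a b c.
Proof.
move=> hq hb hc hQ hBC1 hBC2.
have hqn n : q ^+ n != 0 by apply: expf_neq0.
have nQ : qpoch q q N != 0 by apply: qq_neq0 => j hj; apply: hQ; bnd.
have nB : qpoch q (b * c) N != 0 by apply: bc_neq0 => j hj; apply: hBC2; bnd.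
have nY : qpoch q ((q ^+ 0)^-1 * c / b) N != 0.
  apply: qpoch_neq0 => j hj; apply: nz_ratio => //; rewrite eq_sym; apply: hBC1; bnd.
have nY1 : 1 - (q ^+ 0)^-1 * c / b * q ^+ N != 0.
  apply: nz_ratio => //; rewrite eq_sym; apply: hBC1; bnd.
have nq1 : 1 - q * q ^+ N != 0 by rewrite -exprS subr_eq0 eq_sym; apply: hQ; bnd.
have nbc : 1 - b * c * q ^+ N != 0 by apply: hBC2.
have g1 : b - c * q ^+ N != 0.
  apply: (nz_sub (hBC1 0 N _ _)); rewrite ?expr0 ?mulr1 //; bnd.
have := CcoefE q a b c 0 N.+1; rewrite add0n => ->.
have := CcoefE q a b c 0 N; rewrite add0n => ->.
rewrite /qbinom !subn0 !qpoch0 !qpochS.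
rewrite /bet /Dd !add0n !mul0n.
move: nY nY1; set Y := qpoch q _ N => nY nY1.
field.
by rewrite nB nY nQ oner_neq0 nbc g1 hb nq1.
Qed.

Lemma high q a b c N :
  q != 0 -> b != 0 -> c != 0 ->
  (forall j, (0 < j <= N.+1)%N -> q ^+ j != 1) ->
  (forall i j, (i <= N)%N -> (j <= N)%N -> b * q ^+ i != c * q ^+ j) ->
  (forall j, (j <= N)%N -> 1 - b * c * q ^+ j != 0) ->
  Ccoef q N.+1 N.+1 a b c = alf q N 0 a b c * Ccoef q N N a b c.
Proof.
move=> hq hb hc hQ hBC1 hBC2.
have hqn n : q ^+ n != 0 by apply: expf_neq0.
have nQ : qpoch q q N != 0 by apply: qq_neq0 => j hj; apply: hQ; bnd.
have nB : qpoch q (b * c) N != 0 by apply: bc_neq0 => j hj; apply: hBC2; bnd.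
have nX : qpoch q ((q ^+ 0)^-1 * b / c) N != 0.
  apply: qpoch_neq0 => j hj; apply: nz_ratio => //; apply: hBC1; bnd.
have nq1 : 1 - q * q ^+ N != 0 by rewrite -exprS subr_eq0 eq_sym; apply: hQ; bnd.
have nbc : 1 - b * c * q ^+ N != 0 by apply: hBC2.
have g1 : b * q ^+ N - c != 0.
  apply: (nz_sub (hBC1 N 0 _ _)); rewrite ?expr0 ?mulr1 //; bnd.
have := CcoefE q a b c N.+1 0; rewrite addn0 => ->.
have := CcoefE q a b c N 0; rewrite addn0 => ->.
rewrite /qbinom !subnn !qpoch0 !qpochS.
rewrite /alf /Dd !addn0 !muln0.
move: nX; set X := qpoch q _ N => nX.
field.
by rewrite nB nX nQ oner_neq0 nbc g1 hc nq1 /= -oppr_eq0 opprB g1.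
Qed.

Lemma mainF q a b c N :
  q != 0 -> b != 0 -> c != 0 ->
  (forall j, (0 < j <= N)%N -> q ^+ j != 1) ->
  (forall i j, (i < N)%N -> (j < N)%N -> b * q ^+ i != c * q ^+ j) ->
  (forall j, (j < N)%N -> 1 - b * c * q ^+ j != 0) ->
  hpoly q N a =
    \sum_(k < N.+1) (Ccoef q N k a b c) *: (hpoly q k b * hpoly q (N - k) c).
Proof.
move=> hq hb hc; elim: N => [|N IH] hQ hBC1 hBC2.
  rewrite big_ord1 /= !hpoly0 mulr1.
  have := CcoefE q a b c 0 0; rewrite add0n => ->.
  by rewrite /qbinom !qpoch0 !mul0n expr0 !invr1 !mulr1 !divr1 !mul1r scale1r.
have hD : forall k, (k <= N)%N -> Dd q k (N - k) b c != 0.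
  move=> k hk; rewrite /Dd mulf_neq0 //.
    by rewrite subr_eq0; apply: hBC1; bnd.
  by rewrite subnKC //; apply: hBC2.
apply: step => //.
  apply: IH.
  - by move=> j hj; apply: hQ; bnd.
  - by move=> i j hi hj; apply: hBC1; bnd.
  - by move=> j hj; apply: hBC2; bnd.
have hQ' : forall j, (0 < j <= N.+1)%N -> q ^+ j != 1 by [].
have hBC1' : forall i j, (i <= N)%N -> (j <= N)%N -> b * q ^+ i != c * q ^+ j.
  by move=> i j hi hj; apply: hBC1; bnd.
have hBC2' : forall j, (j <= N)%N -> 1 - b * c * q ^+ j != 0.
  by move=> j hj; apply: hBC2; bnd.
case=> [_|m hm].
  by rewrite add0r /= subn0 (@low q a b c N hq hb hc hQ' hBC1' hBC2').
case: (leqP m.+1 N) => hk.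
  have [r Er] : exists r, N = (m.+1 + r)%N by exists (N - m.+1)%N; rewrite subnKC.
  subst N.
  have E := @mid q a b c m r hq hb hc hQ' hBC1' hBC2'.
  have e1 : (m + r.+1 = m.+1 + r)%N by rewrite addSnnS.
  have e2 : (m.+1 + r.+1 = (m.+1 + r).+1)%N by rewrite addnS.
  have e3 : (m.+1 + r - m = r.+1)%N by bnd.
  rewrite e1 e2 in E; rewrite E e3 addKn.
  by [].
have Em : m = N by bnd.
subst m; rewrite addr0 subnn.
exact: (@high q a b c N hq hb hc hQ' hBC1' hBC2').
Qed.

End Gen.

Local Open Scope complex_scope.

Theorem mainTheorem2 (R : realType) (N : nat) (q a b c : R[i]) :
  q != 0 ->
  (forall j : nat, (1 <= j <= N)%N -> q ^+ j != 1) ->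
  b != 0 -> c != 0 ->
  (forall m : int, 1 - N%:Z <= m <= N%:Z - 1 -> b / c != q ^ m) ->
  (forall j : nat, (j < N)%N -> b * c != q ^ (- j%:Z)) ->
  hpoly q N a =
    \sum_(k < N.+1) (Ccoef q N k a b c) *: (hpoly q k b * hpoly q (N - k) c).
Proof.
move=> hq hQ hb hc hBC hBCq.
have hqn n : q ^+ n != 0 by apply: expf_neq0.
apply: mainF => //.
- move=> i j hi hj; apply/negP => /eqP e.
  have hm : 1 - N%:Z <= j%:Z - i%:Z <= N%:Z - 1 by apply/andP; split; lia.
  have := hBC _ hm; rewrite expfzDr // -exprnN.
  have -> : b / c = q ^+ j / q ^+ i.
    by apply/eqP; rewrite eqr_div // e mulrC.
  by rewrite -exprnP eqxx.
- move=> j hj; apply: contra (hBCq j hj) => /eqP h; rewrite -exprnN; apply/eqP.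
  have h1 : b * c * q ^+ j = 1 by rewrite -(subr0_eq h).
  have -> : b * c = (b * c * q ^+ j) / q ^+ j by field.
  by rewrite h1 div1r.
Qed.
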